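(* Let $X$ have a pdf $f$ satisfying Conditions (A) and (B) below. Suppose the uniform quantizer $Q_{\mathrm{uni}}^\delta$ and the integer-valued Shannon code are used. Then the zero-wait sampler is asymptotically optimal: $$\lim_{\delta\to0}\Big[\mathrm{AoI}(S_{\mathrm z},Q_{\mathrm{uni}}^\delta,L')-\inf_S\mathrm{AoI}(S,Q_{\mathrm{uni}}^\delta,L')\Big]=0,$$ where the infimum is over all stationary deterministic sampling policies $S$.
   Context: Let $X$ be a real random variable with pdf $f$. Condition (A): $f$ is continuous and differentiable, and its support is a bounded interval $I$. Condition (B): $\int_I f\log_2^2 f\,dx$ and $-\int_I f\log_2 f\,dx$ exist and are finite. Quantizer and code. The uniform quantizer $Q_{\mathrm{uni}}^\delta$ partitions $I$ into consecutive cells of length $\delta$. Let $p_i$ be the probability of cell $i$. The integer-valued Shannon code assigns length $\lceil -\log_2 p_i\rceil$ to cell $i$, and $L'$ denotes the resulting random codeword length. Sampling policies. A stationary deterministic sampling policy $S$ is a measurable function $z:[0,\infty)\to[0,W]$, for some fixed $W$, with waiting time $Z=z(L')$. The zero-wait policy $S_{\mathrm z}$ has $z\equiv0$. Objective. The AoI is $\mathrm{AoI}(S,Q,L')=\frac{E[(L'+Z)^2]}{2E[L'+Z]}+E[L']$. *)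

(* Defs.v *)
From HB Require Import structures.
From mathcomp Require Import all_boot all_order all_algebra.
From mathcomp Require Import all_classical all_reals all_analysis.
Set Implicit Arguments. Unset Strict Implicit. Unset Printing Implicit Defensive.
Import Order.TTheory GRing.Theory Num.Theory.
Import numFieldNormedType.Exports.
Local Open Scope classical_set_scope.
Local Open Scope ring_scope.

Section AoI.
Variable R : realType.
Local Notation mu := (@lebesgue_measure R).

Definition log2 (x : R) : R := ln x / ln 2.

Definition is_pdf (f : R -> R) : Prop :=
  measurable_fun setT f /\ (forall x, 0 <= f x) /\
  (\int[mu]_x (f x)%:E = 1)%E.

Definition cont_diff_on_interval (f : R -> R) (a b : R) : Prop :=
  {within `[a, b]%classic, continuous f} /\
  (forall x, a < x < b -> derivable f x 1) /\
  cvg ((fun h => h^-1 * (f (a + h) - f a)) @ 0^'+) /\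
  cvg ((fun h => h^-1 * (f (b + h) - f b)) @ 0^'-).

Definition support_is (f : R -> R) (a b : R) : Prop :=
  closure [set x | 0 < f x] = `[a, b]%classic.

Definition condA (f : R -> R) (a b : R) : Prop :=
  a < b /\ is_pdf f /\ cont_diff_on_interval f a b /\ support_is f a b.

Definition condB (f : R -> R) (a b : R) : Prop :=
  mu.-integrable `[a, b]%classic (fun x => (f x * (log2 (f x)) ^+ 2)%:E) /\
  mu.-integrable `[a, b]%classic (fun x => (- (f x * log2 (f x)))%:E).

Definition ncells (a b delta : R) : nat := `|Num.ceil ((b - a) / delta)|%N.

(* index of the cell containing x in I: consecutive cells of length delta,
   [a, a+delta), [a+delta, a+2 delta), ..., the last one being closed at b *)
Definition qindex (a b delta : R) (x : R) : nat :=
  minn `|Num.floor ((x - a) / delta)|%N (ncells a b delta).-1.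

Definition cell (a b delta : R) (i : nat) : set R :=
  [set x | x \in `[a, b] /\ qindex a b delta x = i].

Definition pcell (f : R -> R) (a b delta : R) (i : nat) : R :=
  Rintegral mu (cell a b delta i) f.

Definition shannon_len (f : R -> R) (a b delta : R) (i : nat) : R :=
  (Num.ceil (- log2 (pcell f a b delta i)))%:~R.

Definition EL (f : R -> R) (a b delta : R) (g : R -> R) : R :=
  \sum_(i < ncells a b delta) pcell f a b delta i * g (shannon_len f a b delta i).

Definition policy (W : R) (z : R -> R) : Prop :=
  measurable_fun (`[0, +oo[%classic : set R) z /\ (forall x, 0 <= x -> 0 <= z x <= W).

Definition zero_wait : R -> R := fun _ => 0.

Definition AoI (f : R -> R) (a b delta : R) (z : R -> R) : R :=
  EL f a b delta (fun l => (l + z l) ^+ 2) /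
    (2 * EL f a b delta (fun l => l + z l))
  + EL f a b delta (fun l => l).

Definition AoI_inf (f : R -> R) (a b delta W : R) : R :=
  inf [set AoI f a b delta z | z in policy W].

End AoI.

(* Main.v *)
Set Warnings "-all".
Require Import Defs.
From HB Require Import structures.
From mathcomp Require Import all_boot all_order all_algebra.
From mathcomp Require Import all_classical all_reals all_analysis.
From mathcomp Require Import ring lra.
From mathcomp Require Import measurable_realfun.
Import Order.TTheory GRing.Theory Num.Theory.
Import numFieldNormedType.Exports.
Local Open Scope classical_set_scope.
Local Open Scope ring_scope.
Section Core.
Variable R : realType.

Lemma sq_le_4exp (s : R) : 0 <= s -> s ^+ 2 <= 4 * expR s.
Proof.
move=> s0.
have -> : expR s = expR (s / 2) * expR (s / 2) by rewrite -expRD; congr expR; field.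
have h := expR_ge1Dx (s / 2).
have h2 : s / 2 <= expR (s / 2) by lra.
have : (s / 2) * (s / 2) <= expR (s / 2) * expR (s / 2).
  by apply: ler_pM => //; lra.
lra.
Qed.

Lemma ln2_pos : 0 < ln (2 : R).
Proof. by apply: ln_gt0; lra. Qed.

Lemma term_bounds (p m : R) : 0 < m -> 0 <= p <= m ->
  let c := - log2 m in
  let l := ((Num.ceil (- log2 p))%:~R : R) in
  p * c <= p * l /\ p * (l - c) ^+ 2 <= m * (2 + 8 / (ln 2) ^+ 2).
Proof.
move=> m0 /andP[p0 pm] c l.
have L0 := ln2_pos.
have K0 : 0 <= 2 + 8 / (ln (2:R)) ^+ 2.
  by apply: addr_ge0 => //; apply: divr_ge0 => //; exact: sqr_ge0.
case: (eqVneq p 0) => [->|pn0].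
  by rewrite !mul0r; split => //; apply: mulr_ge0 => //; exact: ltW.
have pp : 0 < p by rewrite lt_def pn0 p0.
set s := ln m - ln p.
have s0 : 0 <= s by rewrite subr_ge0 ler_ln // posrE.
have lp : - log2 p = c + s / ln 2.
  by rewrite /c /s /log2; field; rewrite gt_eqF.
have [lo hi] : - log2 p <= l /\ l < - log2 p + 1.
  have := ceil_itv (- log2 p); rewrite -/l => /andP[h1 h2]; split => //.
  by move: h1; rewrite intrB /= => h1; lra.
have sL : 0 <= s / ln 2 by apply: divr_ge0 => //; exact: ltW.
have pe : p = m * expR (- s).
  by rewrite expRN /s expRB !lnK ?posrE // invf_div mulrC divfK // gt_eqF.
have ps2 : p * s ^+ 2 <= 4 * m.
  have e0 := expR_gt0 s.
  have h : s ^+ 2 / expR s <= 4 by rewrite ler_pdivrMr //; exact: sq_le_4exp.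
  have -> : p * s ^+ 2 = m * (s ^+ 2 / expR s) by rewrite pe expRN; ring.
  rewrite mulrC; apply: ler_wpM2r; [exact: ltW|exact: h].
split.
  apply: ler_wpM2l => //; lra.
have d0 : 0 <= l - c by lra.
have d1 : l - c <= s / ln 2 + 1 by lra.
have sq : (l - c) ^+ 2 <= 2 + 2 * ((s / ln 2) ^+ 2).
  have : (l - c) ^+ 2 <= (s / ln 2 + 1) ^+ 2.
    by rewrite ler_sqr ?nnegrE //; lra.
  have := sqr_ge0 (s / ln 2 - 1).
  move=> h1 h2; apply: (le_trans h2); rewrite !expr2 in h1 *; nra.
apply: (le_trans (ler_wpM2l p0 sq)).
rewrite mulrDr mulrCA expr_div_n.
have -> : p * (s ^+ 2 / ln 2 ^+ 2) = (p * s ^+ 2) / ln 2 ^+ 2 by rewrite mulrA.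
have l2 : 0 < ln (2:R) ^+ 2 by rewrite exprn_gt0.
have : p * s ^+ 2 / ln 2 ^+ 2 <= 4 * m / ln 2 ^+ 2.
  by rewrite ler_pM2r ?invr_gt0.
have -> : m * (2 + 8 / ln 2 ^+ 2) = 2 * m + 2 * (4 * m / ln 2 ^+ 2).
  by field; rewrite gt_eqF.
lra.
Qed.
Lemma var_id (N : nat) (p x : nat -> R) (c : R) :
  \sum_(i < N) p i = 1 ->
  \sum_(i < N) p i * (x i) ^+ 2 - (\sum_(i < N) p i * x i) ^+ 2 =
  \sum_(i < N) p i * (x i - c) ^+ 2 - (\sum_(i < N) p i * x i - c) ^+ 2.
Proof.
move=> s1.
have -> : \sum_(i < N) p i * (x i - c) ^+ 2 =
  \sum_(i < N) p i * (x i) ^+ 2 - 2 * c * \sum_(i < N) p i * x i + c ^+ 2 * \sum_(i < N) p i.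
  rewrite mulr_sumr mulr_sumr -sumrB -big_split /=; apply: eq_bigr => i _; ring.
rewrite s1; ring.
Qed.

Lemma var_ge0 (N : nat) (p x : nat -> R) :
  (forall i, 0 <= p i) -> \sum_(i < N) p i = 1 ->
  (\sum_(i < N) p i * x i) ^+ 2 <= \sum_(i < N) p i * (x i) ^+ 2.
Proof.
move=> p0 s1; rewrite -subr_ge0 (var_id N p x (\sum_(i < N) p i * x i) s1) subrr expr0n /= subr0.
by apply: sumr_ge0 => i _; apply: mulr_ge0 => //; exact: sqr_ge0.
Qed.

Lemma core_bounds (N : nat) (p : nat -> R) (m B : R) : 0 < m ->
  (forall i, 0 <= p i <= m) -> \sum_(i < N) p i = 1 -> N%:R * m <= B ->
  let c := - log2 m in
  let l := fun i => ((Num.ceil (- log2 (p i)))%:~R : R) in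
  c <= \sum_(i < N) p i * l i /\
  \sum_(i < N) p i * (l i) ^+ 2 - (\sum_(i < N) p i * l i) ^+ 2
    <= B * (2 + 8 / (ln 2) ^+ 2).
Proof.
move=> m0 pb s1 NB c l.
split.
  have -> : c = \sum_(i < N) p i * c by rewrite -mulr_suml s1 mul1r.
  by apply: ler_sum => i _; have [] := term_bounds (p i) m m0 (pb i).
rewrite (var_id N p l c s1).
have K0 : 0 <= 2 + 8 / (ln (2:R)) ^+ 2.
  by apply: addr_ge0 => //; apply: divr_ge0 => //; exact: sqr_ge0.
apply: le_trans (_ : \sum_(i < N) p i * (l i - c) ^+ 2 <= _).
  by rewrite lerBlDr lerDl; exact: sqr_ge0.
apply: le_trans (_ : \sum_(i < N) m * (2 + 8 / (ln 2) ^+ 2) <= _).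
  by apply: ler_sum => i _; have [] := term_bounds (p i) m m0 (pb i).
rewrite sumr_const card_ord -[_ *+ N]mulr_natl mulrA.
by apply: ler_wpM2r.
Qed.

Lemma pos_len (p : R) : p <= 1 -> 0 <= ((Num.ceil (- log2 p))%:~R : R).
Proof.
move=> p1; rewrite ler0z ceil_ge0.
have : 0 <= - log2 p.
  by rewrite /log2 oppr_ge0 pmulr_lle0 ?invr_gt0 ?ln2_pos // ln_le0.
lra.
Qed.

Lemma aoi_gap (f : R -> R) (a b d W : R) :
  (forall i, 0 <= pcell f a b d i <= 1) ->
  \sum_(i < ncells a b d) pcell f a b d i = 1 ->
  0 < EL f a b d (fun l => l) -> 0 <= W ->
  0 <= AoI f a b d (@zero_wait R) - AoI_inf f a b d W <=
   (EL f a b d (fun l => l ^+ 2) - (EL f a b d (fun l => l)) ^+ 2)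
     / (2 * EL f a b d (fun l => l)).
Proof.
move=> pb s1 E1p W0.
set E1 := EL f a b d (fun l => l).
set E2 := EL f a b d (fun l => l ^+ 2).
have zw : AoI f a b d (@zero_wait R) = E2 / (2 * E1) + E1.
  rewrite /AoI /E1 /E2 /EL /zero_wait.
  by congr (_ / (2 * _) + _); apply: eq_bigr => i _; rewrite addr0.
have lpos : forall i, 0 <= shannon_len f a b d i.
  by move=> i; apply: pos_len; have /andP[] := pb i.
have lower : forall z, policy W z -> 3 / 2 * E1 <= AoI f a b d z.
  move=> z [_ zb].
  set S := EL f a b d (fun l => l + z l).
  set A := EL f a b d (fun l => (l + z l) ^+ 2).
  have SE : E1 <= S.
    apply: ler_sum => i _; apply: ler_wpM2l; first by have /andP[] := pb i.
    by rewrite lerDl; have /andP[] := zb _ (lpos i).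
  have S0 : 0 < S by exact: lt_le_trans SE.
  have AS : S ^+ 2 <= A.
    apply: (var_ge0 (ncells a b d) (pcell f a b d)
      (fun i => shannon_len f a b d i + z (shannon_len f a b d i))) => //.
    by move=> i; have /andP[] := pb i.
  have : S / 2 <= A / (2 * S).
    rewrite ler_pdivlMr ?mulr_gt0 //.
    have -> : S / 2 * (2 * S) = S ^+ 2 by rewrite expr2; field.
    exact: AS.
  rewrite /AoI -/E1 -/S -/A; lra.
set E := [set AoI f a b d z | z in policy W].
have zpol : policy W (@zero_wait R).
  split; first exact: measurable_cst.
  by move=> x _; rewrite /zero_wait lexx W0.
have ne : nonempty E by exists (AoI f a b d (@zero_wait R)); exists (@zero_wait R).
have lb : lbound E (3 / 2 * E1) by move=> y [z zp <-]; exact: lower.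
have i1 : 3 / 2 * E1 <= AoI_inf f a b d W by exact: lb_le_inf ne lb.
have i2 : AoI_inf f a b d W <= AoI f a b d (@zero_wait R).
  by apply: (ge_inf (ex_intro _ _ lb)); exists (@zero_wait R).
have -> : (E2 - E1 ^+ 2) / (2 * E1) = E2 / (2 * E1) + E1 - 3 / 2 * E1.
  by rewrite expr2; field; rewrite gt_eqF.
rewrite -zw; apply/andP; split; lra.
Qed.
End Core.
Section Quant.
Variable R : realType.
Variables (a b d : R).
Hypothesis ab : a < b.
Hypothesis d0 : 0 < d.

Let N := ncells a b d.

Lemma ceil_pos : 0 < Num.ceil ((b - a) / d).
Proof. by rewrite ceil_gt0 divr_gt0 // subr_gt0. Qed.

Lemma ncellsE : (N%:R : R) = (Num.ceil ((b - a) / d))%:~R.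
Proof.
by rewrite /N /ncells -[X in X = _]/((Posz `|Num.ceil ((b - a) / d)|)%:~R) gtz0_abs // ceil_pos.
Qed.

Lemma N_gt0 : (0 < N)%N.
Proof. by rewrite /N /ncells absz_gt0 gt_eqF // ceil_pos. Qed.

Lemma N_lb : b - a <= N%:R * d.
Proof. by rewrite -ler_pdivrMr // ncellsE ceil_ge. Qed.

Lemma N_ub : N%:R * d <= b - a + d.
Proof.
rewrite -ler_pdivlMr // ncellsE.
have := ceilB1_lt ((b - a) / d); rewrite intrB /= => h.
have -> : (b - a + d) / d = (b - a) / d + 1 by field; rewrite gt_eqF.
move: h; rewrite (_ : 1%:~R = 1) //; lra.
Qed.

Lemma qindex_ge x k : a <= x ->
  (k <= qindex a b d x)%N = (k <= N.-1)%N && (a + k%:R * d <= x).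
Proof.
move=> ax; rewrite /qindex leq_min andbC; congr (_ && _).
have t0 : 0 <= (x - a) / d by rewrite divr_ge0 // ?subr_ge0 // ltW.
rewrite -lez_nat gez0_abs ?floor_ge0 // floor_ge_int.
change ((k%:R : R) <= (x - a) / d = (a + k%:R * d <= x)).
by rewrite ler_pdivlMr // lerBrDl.
Qed.

Definition U (k : nat) : set R :=
  if (k <= N.-1)%N then `[a + k%:R * d, +oo[%classic else set0.

Lemma UE x k : a <= x -> U k x <-> (k <= qindex a b d x)%N.
Proof.
move=> ax; rewrite qindex_ge // /U; case: ifP => _ /=.
  by rewrite in_itv /= andbT.
by [].
Qed.

Lemma cellE i : cell a b d i = `[a, b]%classic `&` (U i `\` U i.+1).
Proof.
apply/seteqP; split => x /=.
  move=> [xab qi]; have ax : a <= x by move: xab; rewrite in_itv /= => /andP[].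
  split => //; split.
    by apply/UE => //; rewrite qi.
  by move/UE => /(_ ax); rewrite qi ltnn.
move=> [xab [Ui nUi]]; have ax : a <= x by move: xab; rewrite in_itv /= => /andP[].
split => //.
move/UE : Ui => /(_ ax) h1.
have h2 : ~ (i.+1 <= qindex a b d x)%N by move=> h; apply: nUi; apply/UE.
by apply/eqP; rewrite eq_sym eqn_leq h1 leqNgt; apply/negP.
Qed.

Lemma cell_meas i : measurable (cell a b d i).
Proof.
rewrite cellE; apply: measurableI; first exact: measurable_itv.
by apply: measurableD; rewrite /U; case: ifP => _; (exact: measurable_itv || exact: measurable0).
Qed.

Lemma cell_sub i : cell a b d i `<=` `[a + i%:R * d, a + i.+1%:R * d]%classic.
Proof.
move=> x; rewrite cellE => -[xab [Ui nUi]].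
have [ax xb] : a <= x /\ x <= b by move: xab; rewrite /= in_itv /= => /andP[].
move: Ui; rewrite /U; case: ifP => iN //=; rewrite in_itv /= andbT => lo.
rewrite in_itv /= lo /=.
move: nUi; rewrite /U; case: ifP => iN1 /=.
  by rewrite in_itv /= andbT => /negP; rewrite -ltNge => /ltW.
move=> _.
have iE : i.+1 = N.
  have := N_gt0; move: iN iN1; case: (N) => // n /=; rewrite ltnNge => h1 /negbFE h2 _.
  by apply/eqP; rewrite eqSS eqn_leq h1 h2.
rewrite iE; have := N_lb; lra.
Qed.

Lemma qindex_lt x : (qindex a b d x < N)%N.
Proof.
rewrite /qindex; apply: (leq_ltn_trans (geq_minr _ _)).
by rewrite -/N; have := N_gt0; case: (N).
Qed.

Lemma cells_cover : \big[setU/set0]_(i <- iota 0 N) cell a b d i = `[a, b]%classic.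
Proof.
rewrite -bigcup_seq; apply/seteqP; split => x.
  by move=> [i _]; rewrite cellE => -[].
move=> xab; exists (qindex a b d x) => //=.
by rewrite mem_iota add0n qindex_lt.
Qed.

Lemma cells_triv : trivIset [set` iota 0 N] (cell a b d).
Proof. by move=> i j _ _ [x [[_ <-] [_ <-]]]. Qed.

End Quant.

Section Integ.
Variable R : realType.
Local Notation mu := (@lebesgue_measure R).
Variables (f : R -> R) (a b d M : R).
Hypothesis ab : a < b.
Hypothesis d0 : 0 < d.
Hypothesis f0 : forall x, 0 <= f x.
Hypothesis mf : measurable_fun setT f.
Hypothesis fint : (\int[mu]_x (f x)%:E = 1)%E.
Hypothesis fout : forall x, ~ `[a, b]%classic x -> f x = 0.
Hypothesis fM : forall x, `[a, b]%classic x -> f x <= M.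
Hypothesis M0 : 0 < M.

Lemma mfD D : measurable D -> measurable_fun D (EFin \o f).
Proof.
move=> mD; apply/measurable_EFinP; apply: measurable_funS mf => //.
Qed.

Lemma int_cell_bounds i :
  (0 <= \int[mu]_(x in cell a b d i) (f x)%:E <= (M * d)%:E)%E.
Proof.
have mc := cell_meas R a b d d0 i.
apply/andP; split; first by apply: integral_ge0 => x _; rewrite lee_fin.
apply: (@le_trans _ _ (\int[mu]_(x in cell a b d i) M%:E)%E).
  apply: ge0_le_integral => //.
  all: try (by move=> x _; rewrite lee_fin // ltW).
  all: try exact: mfD.
  all: try exact: measurable_cst.
  all: try (by move=> x _; rewrite lee_fin).
  move=> x cx; rewrite /= lee_fin; apply: fM.
    by move: cx; rewrite (cellE R a b d d0) => -[].
rewrite integral_cst // EFinM; apply: lee_wpmul2l; first by rewrite lee_fin ltW.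
apply: (@le_trans _ _ (mu `[a + i%:R * d, a + i.+1%:R * d]%classic)).
  apply: le_measure; [by rewrite inE | by rewrite inE; exact: measurable_itv | ].
  exact: (cell_sub R a b d ab d0).
rewrite lebesgue_measure_itv /= ifT; last by rewrite lte_fin ltrD2l ltr_pM2r // ltr_nat.
by rewrite -EFinD lee_fin mulrSr; lra.
Qed.


Lemma pcell_bounds i : 0 <= pcell f a b d i <= M * d.
Proof.
have /andP[h0 h1] := int_cell_bounds i.
have fin : (\int[mu]_(x in cell a b d i) (f x)%:E)%E \is a fin_num.
  by rewrite ge0_fin_numE // (le_lt_trans h1) ?ltry.
rewrite /pcell /Rintegral; apply/andP; split; first exact: fine_ge0.
by rewrite -lee_fin fineK.
Qed.

Lemma int_ab : (\int[mu]_(x in `[a, b]%classic) (f x)%:E = 1)%E.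
Proof.
rewrite integral_mkcond -fint; congr integral; apply/funext => x.
rewrite patchE; case: ifPn => // xn; rewrite fout //.
by move=> h; move/negP: xn; apply; rewrite inE.
Qed.

Lemma pcell_sum : \sum_(i < ncells a b d) pcell f a b d i = 1.
Proof.
rewrite -(big_mkord xpredT (pcell f a b d)) /index_iota subn0.
rewrite /pcell /Rintegral sum_fine; last first.
  move=> i _; have /andP[h0 h1] := int_cell_bounds i.
  by rewrite ge0_fin_numE // (le_lt_trans h1) ?ltry.
have h := ge0_integral_bigsetU mu (f := EFin \o f) (cell_meas R a b d d0) (iota_uniq 0 (ncells a b d))
  (cells_triv R a b d).
rewrite /= (cells_cover R a b d ab d0) in h.
rewrite -h ?int_ab //; first exact: mfD (measurable_itv _).
by move=> x _; rewrite lee_fin.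
Qed.
End Integ.

Theorem corollary1 (R : realType) (f : R -> R) (a b W : R) :
  condA f a b -> condB f a b -> 0 <= W ->
  (fun delta => AoI f a b delta (@zero_wait R) - AoI_inf f a b delta W)
    @ 0^'+ --> 0.
Proof.
move=> [ab [[mf [f0 fint]] [[fc _] supp]]] _ W0.
have fout : forall x, ~ `[a, b]%classic x -> f x = 0.
  move=> x xn; apply/eqP; rewrite eq_le f0 andbT leNgt; apply/negP => fx.
  by apply: xn; rewrite -supp; apply: subset_closure.
have [c cab cmax] := EVT_max (ltW ab) fc.
set M := f c + 1.
have M0 : 0 < M by rewrite /M; have := f0 c; lra.
have fM : forall x, `[a, b]%classic x -> f x <= M.
  by move=> x xab; have := cmax x xab; rewrite /M; lra.
set L := ln (2 : R).
have L0 : 0 < L := ln2_pos R.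
set Kc := 2 + 8 / L ^+ 2.
have Kc0 : 0 <= Kc by apply: addr_ge0 => //; apply: divr_ge0 => //; exact: sqr_ge0.
set B := M * (b - a + 1).
set V := B * Kc.
have V0 : 0 <= V by apply: mulr_ge0 => //; apply: mulr_ge0; [exact: ltW|lra].
apply/cvgrPdist_lt => e e0.
set T := L * V / e.
have T0 : 0 <= T by apply: divr_ge0; [apply: mulr_ge0 => //; exact: ltW| exact: ltW].
near=> t.
have t0 : 0 < t by near: t; exact: nbhs_right_gt.
have t1 : t < 1 by near: t; exact: nbhs_right_lt.
have t2 : t < expR (- T) / M.
  by near: t; apply: nbhs_right_lt; rewrite divr_gt0 // expR_gt0.
set m := M * t.
have m0 : 0 < m by rewrite mulr_gt0.
have mT : m < expR (- T) by rewrite /m mulrC -ltr_pdivlMr.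
have eT1 : expR (- T) <= 1 by rewrite expR_le1 oppr_le0.
have pb := pcell_bounds R f a b t M ab t0 f0 mf fM M0.
have s1 := pcell_sum R f a b t M ab t0 f0 mf fint fout fM M0.
have NB : (ncells a b t)%:R * m <= B.
  rewrite /m /B mulrCA; apply: ler_wpM2l; first exact: ltW.
  have := N_ub R a b t ab t0; lra.
have [cE1 var] := core_bounds R (ncells a b t) (pcell f a b t) m B m0 pb s1 NB.
set c0 := - log2 m in cE1.
have lnm : ln m < - T.
  by rewrite -[X in _ < X]expRK ltr_ln ?posrE ?expR_gt0.
have c0V : V < e * c0.
  rewrite /c0 /log2.
  have : T < - ln m by lra.
  rewrite /T => h.
  have : L * V / e / L < - ln m / L by rewrite ltr_pM2r ?invr_gt0.
  have -> : L * V / e / L = V / e by field; apply/andP; split; rewrite gt_eqF.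
  rewrite ltr_pdivrMr // => h2.
  have -> : - (ln m / L) = - ln m / L by rewrite mulNr.
  by rewrite mulrC.
have c0pos : 0 < c0.
  by rewrite /c0 /log2 -mulNr mulr_gt0 ?invr_gt0 // oppr_gt0; lra.
have E1pos : 0 < EL f a b t (fun l => l) by exact: lt_le_trans cE1.
have pb1 : forall i, 0 <= pcell f a b t i <= 1.
  move=> i; have /andP[h0 h1] := pb i; rewrite h0 /=; apply: (le_trans h1); rewrite -/m; lra.
have /andP[g0 g1] := aoi_gap R f a b t W pb1 s1 E1pos W0.
rewrite sub0r normrN ger0_norm //.
apply: (le_lt_trans g1).
rewrite ltr_pdivrMr ?mulr_gt0 //.
have vv : EL f a b t (fun l => l ^+ 2) - EL f a b t (fun l => l) ^+ 2 <= V := var.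
have : e * c0 <= e * EL f a b t (fun l => l) by rewrite ler_pM2l.
set E1 := EL f a b t (fun l => l) in vv E1pos *.
move=> h; nra.
Unshelve. all: by end_near.
Qed.
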